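(* Let $(X,0)$ be a pointed CFG-space over a Boolean algebra $B$ and let $U\subset X$ be a subset which is a CFG-space with the restricted metric and satisfies $0\in U$. Then for every $n\in\mathbb{N}$, $$\alpha_n(X)=\bigvee_{i=0}^{n}\alpha_i(U)\wedge\alpha_{n-i}(U^\perp).$$
   Context: A Boolean metric space over $B$ is a set $X$ with symmetric $d:X\times X\to B$, $d(x,y)=0$ iff $x=y$, and $d(x,z)\le d(x,y)\vee d(y,z)$. A partition of $B$ is a finite family of pairwise disjoint elements with supremum $1$; $x$ is a convex combination of $x_0,\dots,x_n$ with coefficients a partition $a_0,\dots,a_n$ if $a_i\wedge d(x,x_i)=0$ for all $i$. A CFG-space is a Boolean metric space that is convex (every such convex combination of its points exists in it) and finitely generated (some finite subset $S$ has every point as a convex combination of points of $S$). For a pointed space $(X,0)$ write $|x|=d(x,0)$; $x\perp y$ means $d(x,y)=|x|\vee|y|$; for $0\in U\subset X$, $U^\perp=\{y\in X: x\perp y\ \forall x\in U\}$. For a space $Y$ and integer $k>0$, $\alpha_k(Y)=\sup\{\bigwedge_{0\le i<j\le k}d(u_i,u_j): u_0,\dots,u_k\in Y\}$ (for CFG-spaces this supremum exists and is attained), and by convention $\alpha_0(Y)=1$. *)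

(* Defs.v *)
(* A Boolean algebra is a ctbDistrLatticeType (complemented
   distributive lattice with top and bottom). *)
From HB Require Import structures.
From mathcomp Require Import all_boot all_order.
From Stdlib Require Import ClassicalEpsilon.
Set Implicit Arguments. Unset Strict Implicit. Unset Printing Implicit Defensive.
Import Order.Theory.
Local Open Scope order_scope.

Section BMS.
Context {disp : Order.disp_t} {B : ctbDistrLatticeType disp} {X : Type}.
Variable dist : X -> X -> B.

Definition bool_metric (S : X -> Prop) : Prop :=
  (forall x y, S x -> S y -> dist x y = dist y x) /\
  (forall x y, S x -> S y -> (dist x y = \bot <-> x = y)) /\
  (forall x y z, S x -> S y -> S z -> dist x z <= dist x y `|` dist y z).

Definition partition n (a : 'I_n.+1 -> B) : Prop :=
  (forall i j, i != j -> a i `&` a j = \bot) /\ \join_(i < n.+1) a i = \top.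

Definition convex_comb (x : X) n (a : 'I_n.+1 -> B) (xs : 'I_n.+1 -> X) : Prop :=
  forall i, a i `&` dist x (xs i) = \bot.

Definition convex (S : X -> Prop) : Prop :=
  forall n (a : 'I_n.+1 -> B) (xs : 'I_n.+1 -> X),
    partition a -> (forall i, S (xs i)) ->
    exists x, S x /\ convex_comb x a xs.

Definition fin_gen (S : X -> Prop) : Prop :=
  exists s : seq X, (forall y, List.In y s -> S y) /\
    forall x, S x -> exists n (a : 'I_n.+1 -> B) (xs : 'I_n.+1 -> X),
      partition a /\ (forall i, List.In (xs i) s) /\ convex_comb x a xs.

Definition CFG (S : X -> Prop) : Prop :=
  bool_metric S /\ convex S /\ fin_gen S.

Definition orth (x0 x y : X) : Prop := dist x y = dist x x0 `|` dist y x0.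

(* U^⊥ inside X (X is the whole type) *)
Definition perp (U : X -> Prop) (x0 : X) : X -> Prop :=
  fun y => forall x, U x -> orth x0 x y.

Definition is_lub (P : B -> Prop) (a : B) : Prop :=
  (forall b, P b -> b <= a) /\ (forall c, (forall b, P b -> b <= c) -> a <= c).

Definition alpha_set (S : X -> Prop) (k : nat) : B -> Prop :=
  fun b => exists u : 'I_k.+1 -> X, (forall i, S (u i)) /\
    b = \meet_(i < k.+1) \meet_(j < k.+1 | (i < j)%N) dist (u i) (u j).

(* alpha_0 = 1; alpha_k = the supremum (chosen by epsilon; it exists for CFG-spaces) *)
Definition alpha (S : X -> Prop) (k : nat) : B :=
  if k is 0 then \top else epsilon (inhabits \bot) (is_lub (alpha_set S k)).

End BMS.

(* Main.v *)
Require Import Defs.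
From HB Require Import structures.
From mathcomp Require Import all_boot all_order.
Import Order.Theory.
Local Open Scope order_scope.
From Stdlib Require Import ClassicalEpsilon.
Set Implicit Arguments. Unset Strict Implicit. Unset Printing Implicit Defensive.

Section Bool.
Context {disp : Order.disp_t} {B : ctbDistrLatticeType disp}.
Implicit Types a b c e : B.

Lemma split_le a b c : a `&` c <= b -> a `&` ~` c <= b -> a <= b.
Proof.
move=> h1 h2; have -> : a = (a `&` c) `|` (a `&` ~` c) by rewrite -meetUr joinxC meetx1.
by rewrite leUx h1 h2.
Qed.

Lemma meet_drop c x y : c `&` x = \bot -> c `&` (x `|` y) <= c `&` y.
Proof. by move=> h; rewrite meetUr h join0x. Qed.

Lemma le_compl_join a b c : a `&` b <= c -> a <= ~` b `|` c.
Proof.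
move=> h; apply: (split_le (c:=b)).
  by apply: le_trans (leUr _ _); rewrite h.
by rewrite meetC; apply: le_trans (leUl _ _); exact: leIl.
Qed.

Lemma le_of_compl_join a b c : a <= ~` b `|` c -> a `&` b <= c.
Proof.
move=> h; apply: le_trans (leI2 h (lexx b)) _.
by rewrite meetUl meetCx join0x leIl.
Qed.

Lemma meet_joins_le n (a : 'I_n -> B) e J :
  (forall i, e `&` a i <= J) -> e `&` \join_(i < n) a i <= J.
Proof.
move=> H; elim/big_rec: _ => [|i x _ IH]; first by rewrite meetx0 le0x.
by rewrite meetUr leUx H IH.
Qed.

Lemma le_bot_eq a : a <= \bot -> a = \bot.
Proof. by rewrite lex0 => /eqP. Qed.

End Bool.
Section Metric.
Context {disp : Order.disp_t} {B : ctbDistrLatticeType disp} {X : Type}.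
Variable dist : X -> X -> B.
Hypothesis dsym : forall x y, dist x y = dist y x.
Hypothesis drefl : forall x, dist x x = \bot.
Hypothesis dtri : forall x y z, dist x z <= dist x y `|` dist y z.

Lemma agree c a a' b b' : c `&` dist a a' = \bot -> c `&` dist b b' = \bot ->
  c `&` dist a' b' <= dist a b.
Proof.
move=> h1 h2.
have t : dist a' b' <= dist a a' `|` (dist a b `|` dist b b').
  apply: le_trans (dtri a' a b') _; rewrite (dsym a' a).
  by apply: leU2 => //; exact: dtri.
apply: le_trans (leI2 (lexx c) t) _.
apply: le_trans (meet_drop _ h1) _.
by rewrite meetUr h2 joinx0 leIr.
Qed.

Lemma agree_le c a a' b b' : c `&` dist a a' = \bot -> c `&` dist b b' = \bot ->
  c <= dist a b -> c <= dist a' b'.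
Proof.
move=> h1 h2 h.
rewrite -(meet_l h).
by apply: agree; rewrite ?(dsym a') ?(dsym b') ?h1 ?h2.
Qed.

End Metric.

Section Metric2.
Context {disp : Order.disp_t} {B : ctbDistrLatticeType disp} {X : Type}.
Variable dist : X -> X -> B.
Hypothesis dsym : forall x y, dist x y = dist y x.
Hypothesis drefl : forall x, dist x x = \bot.
Hypothesis dtri : forall x y z, dist x z <= dist x y `|` dist y z.

Lemma agree_r c a b b' : c `&` dist b b' = \bot -> c `&` dist a b = c `&` dist a b'.
Proof.
move=> h; have ha : c `&` dist a a = \bot by rewrite drefl meetx0.
apply: le_anti; rewrite !lexI !leIl /=; apply/andP; split.
  by apply: (agree dsym dtri) => //; rewrite dsym.
by apply: (agree dsym dtri) => //.
Qed.

Lemma agree_l c a a' b : c `&` dist a a' = \bot -> c `&` dist a b = c `&` dist a' b.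
Proof. by move=> h; rewrite (dsym a b) (dsym a' b); apply: agree_r. Qed.

End Metric2.
Section PDsec.
Context {disp : Order.disp_t} {B : ctbDistrLatticeType disp} {X : Type}.
Variable dist : X -> X -> B.
Variable x0 : X.

Definition PD (c : B) (l : seq X) := forall i j, (i < j)%N -> (j < size l)%N ->
  c <= dist (nth x0 l i) (nth x0 l j).

Lemma PD_mono c c' l : c' <= c -> PD c l -> PD c' l.
Proof. by move=> le h i j ij js; apply: le_trans le (h i j ij js). Qed.

Lemma PD_nil c : PD c [::].
Proof. by move=> i j _. Qed.

Lemma PD_consE c a l : PD c (a :: l) <->
  (forall i, (i < size l)%N -> c <= dist a (nth x0 l i)) /\ PD c l.
Proof.
split.
  move=> h; split.
    by move=> i il; exact: (h 0%N i.+1).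
  by move=> i j ij jl; exact: (h i.+1 j.+1).
move=> [h1 h2] [|i] [|j] //= ij jl; first exact: h1.
exact: h2.
Qed.

Lemma PD_ext c l l' : size l = size l' ->
  (forall i, (i < size l)%N -> nth x0 l i = nth x0 l' i) -> PD c l -> PD c l'.
Proof.
move=> hs he h i j ij jl.
have jl' : (j < size l)%N by rewrite hs.
have il : (i < size l)%N := ltn_trans ij jl'.
rewrite -(he i il) -(he j jl'); exact: h.
Qed.

Lemma nth_In l i : (i < size l)%N -> List.In (nth x0 l i) l.
Proof.
elim: l i => [|a l IH] [|i] //= h; first by left.
by right; apply: IH.
Qed.

Lemma In_nth l y : List.In y l -> exists i, (i < size l)%N /\ nth x0 l i = y.
Proof.
elim: l => [|a l IH] //= [->|h]; first by exists 0%N.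
by have [i [h1 h2]] := IH h; exists i.+1.
Qed.

Definition mf k (u : 'I_k.+1 -> X) : B :=
  \meet_(i < k.+1) \meet_(j < k.+1 | (i < j)%N) dist (u i) (u j).

Definition lst k (u : 'I_k.+1 -> X) : seq X := mkseq (fun i => u (inord i)) k.+1.

Lemma size_lst k u : size (@lst k u) = k.+1.
Proof. by rewrite size_mkseq. Qed.

Lemma mfP k (u : 'I_k.+1 -> X) c : c <= mf u <-> PD c (lst u).
Proof.
rewrite /mf /lst; split.
  move=> /meetsP h i j ij; rewrite size_mkseq => jk.
  have ik : (i < k.+1)%N by exact: ltn_trans ij jk.
  rewrite !nth_mkseq //.
  move: (h (inord i) isT) => /meetsP; apply.
  by rewrite !inordK.
move=> h; apply/meetsP => i _; apply/meetsP => j ij.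
have := h i j ij; rewrite size_mkseq !nth_mkseq // !inord_val; apply => //.
Qed.

Definition fn (l : seq X) k : 'I_k.+1 -> X := fun i => nth x0 l i.

Lemma lst_fn l k : size l = k.+1 -> lst (@fn l k) = l.
Proof.
move=> hs; apply: (@eq_from_nth _ x0); first by rewrite size_lst hs.
by move=> i; rewrite size_lst => ik; rewrite nth_mkseq // /fn inordK.
Qed.

Lemma In_lst k (u : 'I_k.+1 -> X) w : List.In w (lst u) -> exists i, w = u i.
Proof.
move=> hw; have [j [hj <-]] := In_nth hw.
move: hj; rewrite size_lst => hj; rewrite /lst nth_mkseq //.
by exists (inord j).
Qed.

End PDsec.
Section Glue.
Context {disp : Order.disp_t} {B : ctbDistrLatticeType disp} {X : Type}.
Variable dist : X -> X -> B.

Lemma glue (S : X -> Prop) c p q : convex dist S -> S p -> S q ->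
  exists z, S z /\ c `&` dist z p = \bot /\ ~` c `&` dist z q = \bot.
Proof.
move=> cv Sp Sq.
pose a : 'I_2 -> B := fun i => if i == ord0 then c else ~` c.
pose xs : 'I_2 -> X := fun i => if i == ord0 then p else q.
have pa : Defs.partition a.
  split.
    move=> [[|[|i]] hi] [[|[|j]] hj] //= _; rewrite /a /=.
      exact: meetxC.
    exact: meetCx.
  by rewrite big_ord_recr big_ord_recr big_ord0 /= join0x /a /= joinxC.
have [z [Sz cz]] := cv 1%N a xs pa (fun i => if i == ord0 as b return S (if b then p else q) then Sp else Sq).
by exists z; split => //; split; [exact: (cz ord0) | exact: (cz ord_max)].
Qed.

End Glue.
Section Main.
Context {disp : Order.disp_t} {B : ctbDistrLatticeType disp} {X : Type}.
Variable dist : X -> X -> B.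
Variable x0 : X.
Variable U : X -> Prop.
Hypothesis HX : CFG dist (fun _ => True).
Hypothesis HU : CFG dist U.
Hypothesis Ux0 : U x0.

Lemma dsym x y : dist x y = dist y x.
Proof. by case: HX => [[h _] _]; apply: h. Qed.
Lemma drefl x : dist x x = \bot.
Proof. by case: HX => [[_ [h _]] _]; apply/(h x x I I). Qed.
Lemma dtri x y z : dist x z <= dist x y `|` dist y z.
Proof. by case: HX => [[_ [_ h]] _]; apply: h. Qed.

Let agr := agree dsym dtri.
Let agrl := agree_le dsym dtri.
Let agR := agree_r dsym drefl dtri.
Let agL := agree_l dsym drefl dtri.

Lemma sym0 c a b : c `&` dist a b = \bot -> c `&` dist b a = \bot.
Proof. by rewrite dsym. Qed.

Lemma proj_list x (l : seq X) : (forall g, List.In g l -> U g) ->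
  exists r p, U p /\ r `&` dist x p = \bot /\
    forall g, List.In g l -> ~` r <= dist x g.
Proof.
elim: l => [|g l IH] Hl.
  by exists \bot, x0; split => //; rewrite meet0x.
have [r [p [Up [rp hr]]]] := IH (fun y hy => Hl y (or_intror hy)).
have [z [Uz [zp zg]]] := glue r (proj1 (proj2 HU)) Up (Hl g (or_introl erefl)).
exists (r `|` ~` dist x g), z; split => //; split.
  apply: le_bot_eq; rewrite meetUl leUx; apply/andP; split.
    by rewrite (agR _ zp) rp.
  apply: (split_le (c := r)).
    by rewrite -meetA (meetC (dist x z) r) (agR _ zp) rp meetx0.
  rewrite -meetA (meetC (dist x z)) (agR _ zg) meetA (meetC (~` dist x g)).
  by rewrite -meetA meetCx meetx0.
move=> g' [<-|hg']; rewrite complU complK.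
  exact: leIr.
by apply: le_trans (leIl _ _) _; apply: hr.
Qed.

Lemma proj x : exists r p, U p /\ r `&` dist x p = \bot /\
    forall u, U u -> ~` r <= dist x u.
Proof.
case: HU => _ [_ [s [Us Hs]]].
have [r [p [Up [rp hr]]]] := proj_list x Us.
exists r, p; split => //; split => // u Uu.
have [n [a [xs [[_ ja] [xin cc]]]]] := Hs u Uu.
rewrite -[~` r]meetx1 -ja; apply: meet_joins_le => i.
apply: le_trans (leI2 (hr _ (xin i)) (lexx (a i))) _.
by rewrite meetC -(agR _ (cc i)) leIr.
Qed.


Lemma perp_x0 : perp dist U x0 x0.
Proof. by move=> u _; rewrite /orth drefl joinx0. Qed.

Lemma projq x : exists r p q, U p /\ r `&` dist x p = \bot /\
    (forall u, U u -> ~` r <= dist x u) /\ perp dist U x0 q /\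
    r `&` dist q x0 = \bot /\ ~` r `&` dist q x = \bot.
Proof.
have [r [p [Up [rp hr]]]] := proj x.
have [z [_ [zx0 zx]]] := @glue _ _ _ dist (fun _ => True) r x0 x (proj1 (proj2 HX)) I I.
exists r, p, z; do 3!(split => //); split => //.
move=> u Uu; rewrite /orth.
have hnr : ~` r <= dist u z.
  rewrite dsym; apply: (agrl (a := x) (b := u)) => //; first exact: sym0.
    by rewrite drefl meetx0.
  exact: hr.
apply/le_anti/andP; split.
  by apply: le_trans (dtri u x0 z) _; rewrite (dsym x0 z).
rewrite leUx; apply/andP; split.
  apply: (split_le (c := r)); last exact: le_trans (leIr _ _) hnr.
  by rewrite meetC -(agR _ zx0) leIr.
apply: (split_le (c := r)); last exact: le_trans (leIr _ _) hnr.
by rewrite meetC zx0 le0x.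
Qed.

End Main.
Section Lub.
Context {disp : Order.disp_t} {B : ctbDistrLatticeType disp} {X : Type}.
Variable dist : X -> X -> B.
Hypothesis dsym : forall x y, dist x y = dist y x.
Hypothesis drefl : forall x, dist x x = \bot.
Hypothesis dtri : forall x y z, dist x z <= dist x y `|` dist y z.
Variable x0 : X.
Variable S : X -> Prop.
Variable s : seq X.
Hypothesis Sx0 : S x0.
Hypothesis Hs : forall g, List.In g s -> S g.
Hypothesis Hgen : forall y, S y -> exists n (a : 'I_n.+1 -> B) (xs : 'I_n.+1 -> X),
      Defs.partition a /\ (forall i, List.In (xs i) s) /\ convex_comb dist y a xs.

Local Notation PD := (PD dist x0).

Lemma list_agree c e u g ts us : c `&` dist u g = \bot -> PD e (ts ++ u :: us) ->
  c <= e -> PD c (ts ++ g :: us).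
Proof.
move=> h hpd ce i j ij jl.
have key : forall k, c `&` dist (nth x0 (ts ++ u :: us) k) (nth x0 (ts ++ g :: us) k) = \bot.
  move=> k; rewrite !nth_cat; case: ifP => _; first by rewrite drefl meetx0.
  by case: (k - size ts)%N => [|m] //=; rewrite drefl meetx0.
apply: (agree_le dsym dtri (key i) (key j)).
apply: le_trans ce _; apply: hpd => //.
by move: jl; rewrite !size_cat.
Qed.

Lemma gen_sub us : forall ts, (forall w, List.In w us -> S w) -> forall J,
  (forall gs, size gs = size us -> (forall g, List.In g gs -> List.In g s) ->
     forall c, PD c (ts ++ gs) -> c <= J) ->
  forall e, PD e (ts ++ us) -> e <= J.
Proof.
elim: us => [|u us IH] ts Hus J H e He.
  exact: (H [::]).
have [n [a [xs [[_ ja] [xin cc]]]]] := Hgen (Hus u (or_introl erefl)).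
rewrite -[e]meetx1 -ja; apply: meet_joins_le => i.
apply: (IH (rcons ts (xs i))) => [w hw|gs hs hin c hpd|].
- by apply: Hus; right.
- apply: (H (xs i :: gs)); first by rewrite /= hs.
    by move=> g [<-|hg]; [exact: xin | exact: hin].
  by rewrite -cat_rcons.
- rewrite cat_rcons; apply: (list_agree (e := e)) He _; last exact: leIl.
  by rewrite -meetA cc meetx0.
Qed.

Lemma lub_exists k : exists L, is_lub (alpha_set dist S k) L.
Proof.
exists (\join_(f : {ffun 'I_k.+1 -> 'I_(size s)}) mf dist (fun i => nth x0 s (f i))).
split.
  move=> b [u [Su ->]].
  have hp : PD (mf dist u) (lst u) by apply/mfP.
  apply: (gen_sub (ts := [::])) hp => [w hw|gs hs hin c hpd].
    have [i [hi <-]] := In_nth x0 hw.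
    by rewrite nth_mkseq //; move: hi; rewrite size_lst.
  have ex : forall i : 'I_k.+1, exists j : 'I_(size s), nth x0 s j = nth x0 gs i.
    move=> i.
    have hi : (i < size gs)%N by rewrite hs size_lst.
    have [j [hj ej]] := In_nth x0 (hin _ (nth_In x0 hi)).
    by exists (Ordinal hj).
  pose f : {ffun 'I_k.+1 -> 'I_(size s)} := [ffun i => proj1_sig (constructive_indefinite_description _ (ex i))].
  suff hm : c <= mf dist (fun i => nth x0 s (f i)).
    by rewrite (bigD1 f) //=; apply: le_trans hm (leUl _ _).
  apply/mfP; apply: PD_ext hpd.
    by rewrite size_lst hs size_lst.
  move=> i; rewrite hs size_lst => ik.
  rewrite nth_mkseq // ffunE.
  case: (constructive_indefinite_description _ _) => j /= ->.
  by rewrite inordK.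
move=> c hc; apply/joinsP => f _; apply: hc.
exists (fun i => nth x0 s (f i)); split => //.
move=> i; apply: Hs; apply: nth_In.
exact: ltn_ord.
Qed.

Lemma alpha_lub k : is_lub (alpha_set dist S k) (alpha dist S k).
Proof.
case: k => [|k].
  split => [b _|c hc]; first exact: lex1.
  apply: hc; exists (fun _ => x0); split => //.
  apply/le_anti/andP; split; last exact: lex1.
  apply/(@mfP _ _ _ dist x0) => i j ij; rewrite size_lst => j1.
  by case: j ij j1 => [|j]; rewrite ?ltn0.
exact: (epsilon_spec _ _ (lub_exists k.+1)).
Qed.

End Lub.

Lemma lub_unique {disp : Order.disp_t} {B : ctbDistrLatticeType disp} (P : B -> Prop) a b :
  is_lub P a -> is_lub P b -> a = b.
Proof.
move=> [ua la] [ub lb]; apply/le_anti/andP; split; [exact: la | exact: lb].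
Qed.
Section Core.
Context {disp : Order.disp_t} {B : ctbDistrLatticeType disp} {X : Type}.
Variable dist : X -> X -> B.
Variable x0 : X.
Variable U : X -> Prop.
Hypothesis HX : CFG dist (fun _ => True).
Hypothesis HU : CFG dist U.
Hypothesis Ux0 : U x0.
Variables (R : X -> B) (P Q : X -> X).
Hypothesis HP : forall x, U (P x) /\ R x `&` dist x (P x) = \bot /\
    (forall u, U u -> ~` R x <= dist x u) /\ perp dist U x0 (Q x) /\
    R x `&` dist (Q x) x0 = \bot /\ ~` R x `&` dist (Q x) x = \bot.

Let dsym := dsym HX.
Let drefl := drefl HX.
Let dtri := dtri HX.
Let agrl := agree_le dsym dtri.
Let agR := agree_r dsym drefl dtri.
Local Notation PD := (PD dist x0).
Local Notation Perp := (perp dist U x0).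

Lemma mono0 (c c' t : B) : c' <= c -> c `&` t = \bot -> c' `&` t = \bot.
Proof. by move=> le h; apply: le_bot_eq; rewrite -h; exact: leI2. Qed.

Lemma PD_cons_In c w l : (forall z, List.In z l -> c <= dist w z) -> PD c l -> PD c (w :: l).
Proof.
move=> h hl; apply/PD_consE; split => // i il; apply: h; exact: nth_In.
Qed.

Definition agrees c w (xs : seq X) := exists y, List.In y xs /\ c `&` dist w y = \bot.

Lemma agrees_mono c c' w xs x : c' <= c -> agrees c w xs -> agrees c' w (x :: xs).
Proof. by move=> le [y [hy h]]; exists y; split; [right | exact: mono0 h]. Qed.

Definition Good (xs : seq X) (c : B) := exists us vs,
  (forall w, List.In w us -> U w) /\ (forall w, List.In w vs -> Perp w) /\
  (0 < size us)%N /\ (size us + size vs = (size xs).+1)%N /\ PD c us /\ PD c vs /\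
  ((vs <> [::] /\ (forall w, List.In w us -> agrees c w xs) /\
     (forall w, List.In w vs -> c `&` dist w x0 = \bot \/ agrees c w xs)) \/
   (size us = 1%N /\ forall w, List.In w vs -> agrees c w xs /\ c <= dist w x0)).

Lemma Good_nil : Good [::] \top.
Proof.
exists [:: x0], [::]; split; first by move=> w [<-|].
split => //; split => //; split => //.
split; first by move=> i [|j] //; case: j.
split; first exact: PD_nil.
by right.
Qed.

Lemma Good_notR xs c c' x : Good xs c -> c' <= c -> (forall y, List.In y xs -> c' <= dist x y) ->
  c' <= ~` R x -> Good (x :: xs) c'.
Proof.
move=> [us [vs [Uus [Pvs [su [ss [pu [pv sh]]]]]]]] le hx hr.
have [_ [_ [hR [hQ [_ hQx]]]]] := HP x.
have hq : c' `&` dist x (Q x) = \bot by rewrite dsym; exact: mono0 hr hQx.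
have hxx0 : c' <= dist x x0 := le_trans hr (hR x0 Ux0).
have dist_ok : forall z, List.In z vs -> (c `&` dist z x0 = \bot \/ agrees c z xs) ->
    c' <= dist (Q x) z.
  move=> z hz [h0|[y [hy hy0]]].
    apply: (agrl (a := x) (b := x0)) => //; rewrite dsym; exact: mono0 h0.
  apply: (agrl (a := x) (b := y)) => //; last exact: hx.
  rewrite dsym; exact: mono0 hy0.
exists us, (Q x :: vs); split => //; split.
  by move=> w [<-|hw]; [exact: hQ | exact: Pvs].
split => //; split; first by rewrite /= addnS ss.
split; first exact: PD_mono pu.
split.
  apply: PD_cons_In; last exact: PD_mono pv.
  move=> z hz; apply: dist_ok => //.
  case: sh => [[_ [_ h]]|[_ h]]; first exact: h.
  by right; case: (h z hz).
case: sh => [[nv [hu hv]]|[s1 hv]].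
  left; split => //; split.
    by move=> w hw; apply: (agrees_mono x le); apply: hu.
  move=> w [<-|hw].
    by right; exists x; split; [left | rewrite dsym in hq].
  case: (hv w hw) => [h0|ha]; first by left; exact: mono0 h0.
  by right; apply: (agrees_mono x le).
right; split => //.
move=> w [<-|hw].
  split; first by exists x; split; [left | rewrite dsym in hq].
  by apply: (agrl (a := x) (b := x0)) => //; rewrite drefl meetx0.
have [h1 h2] := hv w hw; split; first exact: (agrees_mono x le).
exact: le_trans le h2.
Qed.


Lemma Good_R xs c c' x : Good xs c -> c' <= c -> (forall y, List.In y xs -> c' <= dist x y) ->
  c' <= R x -> Good (x :: xs) c'.
Proof.
move=> [us [vs [Uus [Pvs [su [ss [pu [pv sh]]]]]]]] le hx hr.
have [UP [RP _]] := HP x.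
have hp : c' `&` dist x (P x) = \bot by exact: mono0 hr RP.
case: sh => [[nv [hu hv]]|[s1 hv]].
  exists (P x :: us), vs; split.
    by move=> w [<-|hw]; [exact: UP | exact: Uus].
  split => //; split => //; split; first by rewrite /= addSn ss.
  split.
    apply: PD_cons_In; last exact: PD_mono pu.
    move=> z hz; have [y [hy hy0]] := hu z hz.
    apply: (agrl (a := x) (b := y)) => //; last exact: hx.
    rewrite dsym; exact: mono0 hy0.
  split; first exact: PD_mono pv.
  left; split => //; split.
    move=> w [<-|hw]; first by exists x; split; [left | rewrite dsym in hp].
    by apply: (agrees_mono x le); apply: hu.
  move=> w hw; case: (hv w hw) => [h0|ha]; first by left; exact: mono0 h0.
  by right; apply: (agrees_mono x le).
exists [:: P x], (x0 :: vs); split.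
  by move=> w [<-|].
split.
  by move=> w [<-|hw]; [exact: perp_x0 | exact: Pvs].
split => //; split.
  by move: ss; rewrite s1 /= add1n => -[->].
split; first by move=> i [|j] //; case: j.
split.
  apply: PD_cons_In; last exact: PD_mono pv.
  by move=> z hz; rewrite dsym; apply: le_trans le _; case: (hv z hz).
left; split => //; split.
  by move=> w [<-|] //; exists x; split; [left | rewrite dsym in hp].
move=> w [<-|hw]; first by left; rewrite drefl meetx0.
by right; apply: (agrees_mono x le); case: (hv w hw).
Qed.

Lemma Cov xs : forall J, (forall c, Good xs c -> c <= J) ->
  forall e, PD e xs -> e <= J.
Proof.
elim: xs => [|x xs IH] J H e He.
  by apply: le_trans (lex1 e) _; apply: H; exact: Good_nil.
have [hx hxs] := (PD_consE dist x0 e x xs).1 He.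
have hxy : forall y, List.In y xs -> e <= dist x y.
  by move=> y hy; have [i [hi <-]] := In_nth x0 hy; exact: hx.
suff : e <= ~` e `|` J.
  by move/le_of_compl_join; rewrite meetxx.
apply: (IH _ _ e hxs) => c hc.
apply: le_compl_join.
apply: (split_le (c := R x)).
  apply: H; apply: (Good_R hc).
  - by rewrite -meetA; exact: leIl.
  - by move=> y hy; apply: le_trans (hxy y hy); rewrite -meetA (meetC e) meetA; exact: leIr.
  - exact: leIr.
apply: H; apply: (Good_notR hc).
- by rewrite -meetA; exact: leIl.
- by move=> y hy; apply: le_trans (hxy y hy); rewrite -meetA (meetC e) meetA; exact: leIr.
- exact: leIr.
Qed.


Lemma lubU k : is_lub (alpha_set dist U k) (alpha dist U k).
Proof.
case: HU => _ [_ [s [Us Hs]]].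
exact: (@alpha_lub _ _ _ dist dsym drefl dtri x0 U s Ux0 Us Hs k).
Qed.

Lemma lubX k : is_lub (alpha_set dist (fun _ => True) k) (alpha dist (fun _ => True) k).
Proof.
case: HX => _ [_ [s [Us Hs]]].
exact: (@alpha_lub _ _ _ dist dsym drefl dtri x0 (fun _ => True) s I Us Hs k).
Qed.

Lemma lubP k : is_lub (alpha_set dist Perp k) (alpha dist Perp k).
Proof.
case: HX => _ [_ [s [_ Hs]]].
apply: (@alpha_lub _ _ _ dist dsym drefl dtri x0 Perp (map Q s) (@perp_x0 _ _ _ dist x0 U HX) _ _ k).
  move=> g /List.in_map_iff [y [<- _]]; by case: (HP y) => [_ [_ [_ [h _]]]].
move=> y Py; have [n [a [xs [pa [xin cc]]]]] := Hs y I.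
exists n, a, (fun i => Q (xs i)); split => //; split.
  by move=> i; apply: List.in_map.
move=> i; set g := xs i.
have [UPg [RPg [_ [_ [RQg nRQg]]]]] := HP g.
have hy := cc i; rewrite -/g in hy.
apply: le_bot_eq; apply: (split_le (c := R g)).
  rewrite -meetA (meetC _ (R g)) meetA.
  set c1 := a i `&` R g.
  have c1le : c1 <= a i by exact: leIl.
  have c1R : c1 <= R g by exact: leIr.
  have h1 : c1 `&` dist y g = \bot := mono0 c1le hy.
  have h2 : c1 `&` dist g (P g) = \bot := mono0 c1R RPg.
  have h3 : c1 `&` dist y (P g) = \bot by rewrite -(agR _ h2) h1.
  have h4 : c1 `&` dist y x0 = \bot.
    apply: le_bot_eq; rewrite -h3; apply: leI2 => //.
    by rewrite (dsym y (P g)) (Py (P g) UPg); exact: leUr.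
  by rewrite (agR _ (mono0 c1R RQg)) h4.
rewrite -meetA (meetC _ (~` R g)) meetA.
have c2le : a i `&` ~` R g <= a i by exact: leIl.
have c2R : a i `&` ~` R g <= ~` R g by exact: leIr.
rewrite (agR _ (mono0 c2R nRQg)) (mono0 c2le hy); exact: lexx.
Qed.


Definition Jn n := \join_(i < n.+1) (alpha dist U i `&` alpha dist Perp (n - i)).

Lemma mem_alpha (S : X -> Prop) l k c : size l = k.+1 -> (forall w, List.In w l -> S w) ->
  PD c l -> c <= alpha dist S k -> True.
Proof. by []. Qed.

Lemma le_alpha (S : X -> Prop) l k c : is_lub (alpha_set dist S k) (alpha dist S k) ->
  size l = k.+1 -> (forall w, List.In w l -> S w) -> PD c l -> c <= alpha dist S k.
Proof.
move=> [ub _] sl hS hc.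
have hm : c <= mf dist (@fn X x0 l k) by apply/(@mfP _ _ _ dist x0); rewrite lst_fn.
have hin : alpha_set dist S k (mf dist (@fn X x0 l k)).
  exists (@fn X x0 l k); split => // i; apply: hS; apply: nth_In.
  by rewrite sl.
exact: le_trans hm (ub _ hin).
Qed.

Lemma upper n b : alpha_set dist (fun _ => True) n b -> b <= Jn n.
Proof.
move=> [u [_ ->]].
have hb : PD (mf dist u) (lst u) by apply/(@mfP _ _ _ dist x0).
apply: (@Cov (lst u) (Jn n) _ _ hb) => c [us [vs [Uus [Pvs [su [ss [pu [pv sh]]]]]]]].
rewrite size_lst in ss.
have svs : (0 < size vs)%N.
  case: sh => [[nv _]|[s1 _]]; first by case: vs nv {Pvs pv ss}.
  by move: ss; rewrite s1 add1n => -[->].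
set i := (size us).-1.
have hus : size us = i.+1 by rewrite prednK.
move: ss; rewrite hus addSn => -[ss].
have iln : (i <= n)%N.
  by rewrite -ltnS -ss -{1}(addn0 i) ltn_add2l.
have hvs : size vs = (n - i).+1.
  by rewrite -subSn // -ss addKn.
have cU := le_alpha (lubU i) hus Uus pu.
have cP := le_alpha (lubP (n - i)) hvs Pvs pv.
have il : (i < n.+1)%N by [].
rewrite /Jn (bigD1 (Ordinal il)) //=.
apply: le_trans (leUl _ _); rewrite lexI cU cP.
done.
Qed.


Section WSec.
Variable v0 : X.
Variable W : X -> X.
Hypothesis WA : forall v, ~` dist v x0 `&` dist (W v) v0 = \bot.
Hypothesis WB : forall v, dist v x0 `&` dist (W v) v = \bot.

Lemma nv_le c a b : c <= dist a b -> c `&` ~` dist a x0 <= dist b x0.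
Proof.
move=> h; apply: le_of_compl_join; rewrite complK.
by apply: le_trans h _; rewrite (dsym b x0); exact: dtri.
Qed.

Lemma W1 c u v : U u -> Perp v -> Perp v0 -> c <= dist v0 v -> c <= dist u (W v).
Proof.
move=> Uu Pv Pv0 h.
have hu0 : forall c', c' `&` dist u u = \bot by move=> c'; rewrite drefl meetx0.
apply: (split_le (c := dist v x0)).
  apply: (agrl (a := u) (b := v)); first exact: hu0.
    by rewrite (dsym v (W v)); apply: mono0 (WB v); exact: leIr.
  by rewrite (Pv u Uu); apply: le_trans (leIr _ _) (leUr _ _).
apply: (agrl (a := u) (b := v0)); first exact: hu0.
  by rewrite (dsym v0 (W v)); apply: mono0 (WA v); exact: leIr.
rewrite (Pv0 u Uu); apply: le_trans (leUr _ _).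
by apply: nv_le; rewrite dsym.
Qed.

Lemma W2 c a b : c <= dist a b -> c <= dist v0 a -> c <= dist v0 b ->
  c <= dist (W a) (W b).
Proof.
move=> hab ha hb.
have ga : forall c', c' <= dist a x0 -> c' `&` dist a (W a) = \bot.
  by move=> c' h; rewrite (dsym a (W a)); apply: mono0 (WB a).
have gb : forall c', c' <= dist b x0 -> c' `&` dist b (W b) = \bot.
  by move=> c' h; rewrite (dsym b (W b)); apply: mono0 (WB b).
have na : forall c', c' <= ~` dist a x0 -> c' `&` dist v0 (W a) = \bot.
  by move=> c' h; rewrite (dsym v0 (W a)); apply: mono0 (WA a).
have nb : forall c', c' <= ~` dist b x0 -> c' `&` dist v0 (W b) = \bot.
  by move=> c' h; rewrite (dsym v0 (W b)); apply: mono0 (WA b).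
apply: (split_le (c := dist a x0)); apply: (split_le (c := dist b x0)).
- apply: (agrl (a := a) (b := b)).
  + by apply: ga; apply: le_trans (leIl _ _) (leIr _ _).
  + by apply: gb; exact: leIr.
  + by apply: le_trans (leIl _ _) (le_trans (leIl _ _) hab).
- apply: (agrl (a := a) (b := v0)).
  + by apply: ga; apply: le_trans (leIl _ _) (leIr _ _).
  + by apply: nb; exact: leIr.
  + by rewrite (dsym a v0); apply: le_trans (leIl _ _) (le_trans (leIl _ _) ha).
- apply: (agrl (a := v0) (b := b)).
  + by apply: na; apply: le_trans (leIl _ _) (leIr _ _).
  + by apply: gb; exact: leIr.
  + by apply: le_trans (leIl _ _) (le_trans (leIl _ _) hb).
- apply: le_trans (leI2 (nv_le hab) (lexx (~` dist b x0))) _.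
  by rewrite meetxC le0x.
Qed.

End WSec.


Lemma combine us vs c1 c2 : (forall w, List.In w us -> U w) ->
  (forall w, List.In w vs -> Perp w) -> PD c1 us -> PD c2 vs -> (0 < size vs)%N ->
  exists ws, size ws = (size us + (size vs).-1)%N /\ PD (c1 `&` c2) ws.
Proof.
move=> Uus Pvs pu pv svs.
set v0 := nth x0 vs 0.
have Pv0 : Perp v0 by apply: Pvs; apply: nth_In.
pose Sp v z := ~` dist v x0 `&` dist z v0 = \bot /\ dist v x0 `&` dist z v = \bot.
have ex : forall v, exists z, Sp v z.
  move=> v; have [z [_ [h1 h]]] := @glue _ _ _ dist (fun _ => True) (~` dist v x0) v0 v
      (proj1 (proj2 HX)) I I.
  by exists z; split => //; rewrite complK in h.
pose W v := proj1_sig (@constructive_indefinite_description _ (Sp v) (ex v)).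
have WA : forall v, ~` dist v x0 `&` dist (W v) v0 = \bot.
  by move=> v; exact: (proj1 (proj2_sig (@constructive_indefinite_description _ (Sp v) (ex v)))).
have WB : forall v, dist v x0 `&` dist (W v) v = \bot.
  by move=> v; exact: (proj2 (proj2_sig (@constructive_indefinite_description _ (Sp v) (ex v)))).
exists (us ++ map W (behead vs)); split.
  by rewrite size_cat size_map size_behead.
move=> i j ij; rewrite size_cat size_map size_behead => jl.
have c2v : forall a b, (a < b)%N -> (b < size vs)%N ->
    c1 `&` c2 <= dist (nth x0 vs a) (nth x0 vs b).
  by move=> a b ab bl; apply: le_trans (leIr _ _) (pv a b ab bl).
rewrite !nth_cat.
case: (ltnP j (size us)) => hj.
  have hi : (i < size us)%N := ltn_trans ij hj.
  by rewrite hi; apply: le_trans (leIl _ _) (pu i j ij hj).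
have hk : (j - size us < size (behead vs))%N.
  by rewrite size_behead ltn_subLR.
have hk' : ((j - size us).+1 < size vs)%N by rewrite -ltn_predRL -size_behead.
rewrite (@nth_map _ x0 _ x0 W _ _ hk) nth_behead.
case: (ltnP i (size us)) => hi.
  apply: (W1 WA WB).
  - by apply: Uus; apply: nth_In.
  - by apply: Pvs; apply: nth_In.
  - exact: Pv0.
  - exact: c2v.
have hk2 : (i - size us < j - size us)%N by rewrite ltn_sub2rE.
have hk3 : (i - size us < size (behead vs))%N := ltn_trans hk2 hk.
rewrite (@nth_map _ x0 _ x0 W _ _ hk3) nth_behead.
apply: (W2 WA WB).
- exact: c2v.
- apply: c2v => //; exact: (ltn_trans (hk2 : ((i - size us).+1 < (j - size us).+1)%N) hk').
- exact: c2v.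
Qed.


Lemma least n c : (forall b, alpha_set dist (fun _ => True) n b -> b <= c) -> Jn n <= c.
Proof.
move=> hc; apply/joinsP => i _.
have iln : (i <= n)%N by rewrite -ltnS.
have key : forall bu bv, alpha_set dist U i bu -> alpha_set dist Perp (n - i) bv ->
    bu `&` bv <= c.
  move=> _ _ [u [Uu ->]] [v [Pv ->]].
  have pu : PD (mf dist u) (lst u) by apply/(@mfP _ _ _ dist x0).
  have pv : PD (mf dist v) (lst v) by apply/(@mfP _ _ _ dist x0).
  have hU : forall w, List.In w (lst u) -> U w by move=> w /(In_lst x0) [k ->].
  have hP : forall w, List.In w (lst v) -> Perp w by move=> w /(In_lst x0) [k ->].
  have s0 : (0 < size (lst v))%N by rewrite size_lst.
  have [ws [sws pws]] := combine hU hP pu pv s0.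
  have sws' : size ws = n.+1.
    by rewrite sws !size_lst /= addSn subnKC.
  have hm : mf dist u `&` mf dist v <= mf dist (@fn X x0 ws n).
    by apply/(@mfP _ _ _ dist x0); rewrite lst_fn.
  apply: le_trans hm (hc _ _).
  by exists (@fn X x0 ws n).
apply: le_of_compl_join.
apply: (proj2 (lubU i)) => bu hbu.
apply: le_compl_join; rewrite meetC; apply: le_of_compl_join.
apply: (proj2 (lubP (n - i))) => bv hbv.
by apply: le_compl_join; rewrite meetC; apply: key.
Qed.

Lemma main n : alpha dist (fun _ => True) n = Jn n.
Proof.
apply: lub_unique (lubX n) _; split; [exact: upper | exact: least].
Qed.

End Core.

Unset Implicit Arguments.

Theorem lemma3p2 (disp : Order.disp_t) (B : ctbDistrLatticeType disp) (X : Type)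
  (dist : X -> X -> B) (x0 : X) (U : X -> Prop) :
  CFG dist (fun _ => True) -> CFG dist U -> U x0 ->
  forall n : nat,
    alpha dist (fun _ => True) n =
    \join_(i < n.+1) (alpha dist U i `&` alpha dist (perp dist U x0) (n - i)).
Proof.
move=> HX HU Ux0 n.
pose Sp x (t : B * X * X) := U t.1.2 /\ t.1.1 `&` dist x t.1.2 = \bot /\
    (forall u, U u -> ~` t.1.1 <= dist x u) /\ perp dist U x0 t.2 /\
    t.1.1 `&` dist t.2 x0 = \bot /\ ~` t.1.1 `&` dist t.2 x = \bot.
have ex : forall x, exists t, Sp x t.
  move=> x; have [r [p [q h]]] := projq HX HU Ux0 x.
  by exists (r, p, q).
pose F x := proj1_sig (@constructive_indefinite_description _ (Sp x) (ex x)).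
have HF : forall x, Sp x (F x).
  by move=> x; exact: (proj2_sig (@constructive_indefinite_description _ (Sp x) (ex x))).
exact: (@main _ _ _ dist x0 U HX HU Ux0 (fun x => (F x).1.1) (fun x => (F x).1.2)
  (fun x => (F x).2) HF n).
Qed.
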